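(* Let $S$ be a Hausdorff countably compact topological semigroup which is algebraically a primitive inverse semigroup. Then the inversion $x\mapsto x^{-1}$ on $S$ is continuous if and only if every maximal subgroup of $S$ (with the subspace topology) is a topological group.
   Context: A topological semigroup is a Hausdorff space with jointly continuous associative operation. A semigroup is inverse if every $x$ has a unique $y=x^{-1}$ with $xyx=x$, $yxy=y$; it is primitive inverse if it is non-trivial, inverse, has a zero and all non-zero idempotents are minimal among non-zero idempotents in the natural order. A maximal subgroup is a maximal subgroup of $S$ containing a given idempotent. *)

(* Defs.v *)
From Stdlib Require Import Arith.

Set Implicit Arguments.

Record topology (X : Type) := Topology {
  is_open : (X -> Prop) -> Prop;
  open_full : is_open (fun _ => True);
  open_empty : is_open (fun _ => False);
  open_inter : forall U V, is_open U -> is_open V -> is_open (fun x => U x /\ V x);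
  open_union : forall (I : Type) (F : I -> X -> Prop),
      (forall i, is_open (F i)) -> is_open (fun x => exists i, F i x)
}.

Definition hausdorff {X} (T : topology X) : Prop :=
  forall x y : X, x <> y ->
    exists U V, is_open T U /\ is_open T V /\ U x /\ V y /\
                (forall z, U z -> V z -> False).

(* Countably compact: every countable open cover has a finite subcover.
   Countable covers are indexed by nat (repetitions allowed). *)
Definition countably_compact {X} (T : topology X) : Prop :=
  forall U : nat -> X -> Prop,
    (forall n, is_open T (U n)) ->
    (forall x, exists n, U n x) ->
    exists N, forall x, exists n, n <= N /\ U n x.

(* Continuity, stated for arbitrary families of open sets (so that it
   applies directly to product and subspace topologies below). *)
Definition continuous_wrt {X Y} (OX : (X -> Prop) -> Prop) (OY : (Y -> Prop) -> Prop)
  (f : X -> Y) : Prop :=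
  forall W, OY W -> OX (fun x => W (f x)).

Definition continuous {X Y} (TX : topology X) (TY : topology Y) (f : X -> Y) : Prop :=
  continuous_wrt (is_open TX) (is_open TY) f.

Definition prod_open {X Y} (OX : (X -> Prop) -> Prop) (OY : (Y -> Prop) -> Prop)
  (W : X * Y -> Prop) : Prop :=
  forall p, W p -> exists U V, OX U /\ OY V /\ U (fst p) /\ V (snd p) /\
     (forall a b, U a -> V b -> W (a, b)).

Definition sub_open {X} (T : topology X) (P : X -> Prop) (V : {x | P x} -> Prop) : Prop :=
  exists U, is_open T U /\ forall z, V z <-> U (proj1_sig z).

Section Semigroup.
Context {S : Type} (mul : S -> S -> S).

Definition associative : Prop := forall x y z, mul x (mul y z) = mul (mul x y) z.

Definition topological_semigroup (T : topology S) : Prop :=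
  hausdorff T /\ associative /\
  continuous_wrt (prod_open (is_open T) (is_open T)) (is_open T)
    (fun p => mul (fst p) (snd p)).

Definition inverse_semigroup : Prop :=
  associative /\
  forall x, exists! y, mul (mul x y) x = x /\ mul (mul y x) y = y.

Definition idempotent (e : S) : Prop := mul e e = e.

Definition is_zero (z : S) : Prop := forall x, mul z x = z /\ mul x z = z.

Definition idem_le (f e : S) : Prop := f = mul e f /\ f = mul f e.

Definition primitive_inverse_semigroup : Prop :=
  inverse_semigroup /\
  exists z, is_zero z /\ (exists x, x <> z) /\
    forall e f, idempotent e -> idempotent f -> e <> z -> f <> z ->
      idem_le f e -> f = e.

Definition is_subgroup (G : S -> Prop) (e : S) : Prop :=
  G e /\
  (forall x y, G x -> G y -> G (mul x y)) /\
  (forall x, G x -> mul e x = x /\ mul x e = x) /\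
  (forall x, G x -> exists y, G y /\ mul x y = e /\ mul y x = e).

Definition maximal_subgroup (G : S -> Prop) (e : S) : Prop :=
  is_subgroup G e /\
  forall (G' : S -> Prop) (e' : S), is_subgroup G' e' ->
    (forall x, G x -> G' x) -> forall x, G' x -> G x.

Definition topological_subgroup (T : topology S) (G : S -> Prop) (e : S) : Prop :=
  exists (m : {x | G x} -> {x | G x} -> {x | G x}) (i : {x | G x} -> {x | G x}),
    (forall a b, proj1_sig (m a b) = mul (proj1_sig a) (proj1_sig b)) /\
    (forall a, mul (proj1_sig a) (proj1_sig (i a)) = e /\
               mul (proj1_sig (i a)) (proj1_sig a) = e) /\
    continuous_wrt (prod_open (sub_open T G) (sub_open T G)) (sub_open T G)
      (fun p => m (fst p) (snd p)) /\
    continuous_wrt (sub_open T G) (sub_open T G) i.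

End Semigroup.

(* Main.v *)
Require Import Defs.
From Stdlib Require Import Classical ClassicalEpsilon FunctionalExtensionality PropExtensionality List Arith Lia.

Record alg {S : Type} (mul : S -> S -> S) (inv : S -> S) (z : S) : Prop := {
  a_assoc : forall x y w, mul x (mul y w) = mul (mul x y) w;
  a_uniq : forall x y, mul (mul x y) x = x -> mul (mul y x) y = y -> y = inv x;
  a_inv : forall x, mul (mul x (inv x)) x = x /\ mul (mul (inv x) x) (inv x) = inv x;
  a_zl : forall x, mul z x = z;
  a_zr : forall x, mul x z = z;
  a_prim : forall e f, idempotent mul e -> idempotent mul f -> e <> z -> f <> z ->
      idem_le mul f e -> f = e }.
Arguments a_assoc {S mul inv z} _ _ _ _.
Arguments a_uniq {S mul inv z} _ _ _ _ _.
Arguments a_inv {S mul inv z} _ _.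
Arguments a_zl {S mul inv z} _ _.
Arguments a_zr {S mul inv z} _ _.
Arguments a_prim {S mul inv z} _ _ _ _ _ _ _ _.

Lemma ctx2 {S mul inv z} (A : @alg S mul inv z) u v w :
  mul u v = w -> forall x, mul (mul x u) v = mul x w.
Proof. intros H x. rewrite <- (a_assoc A), H. reflexivity. Qed.
Lemma ctx3 {S mul inv z} (A : @alg S mul inv z) u v t w :
  mul (mul u v) t = w -> forall x, mul (mul (mul x u) v) t = mul x w.
Proof. intros H x. rewrite <- !(a_assoc A), (a_assoc A u), H. reflexivity. Qed.

Lemma ctx4 {S mul inv z} (A : @alg S mul inv z) u v t r w :
  mul (mul (mul u v) t) r = w -> forall x, mul (mul (mul (mul x u) v) t) r = mul x w.
Proof. intros H x. rewrite <- !(a_assoc A), (a_assoc A u), (a_assoc A (mul u v)), H. reflexivity. Qed.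
Ltac nrm A := repeat rewrite (a_assoc A).
Tactic Notation "nrmi" constr(A) "in" hyp(H) := repeat rewrite (a_assoc A) in H.
Ltac srw A H := first [rewrite H | rewrite (ctx2 A _ _ _ H) | rewrite (ctx3 A _ _ _ _ H) | rewrite (ctx4 A _ _ _ _ _ H)].

Lemma inv_l {S mul inv z} (A : @alg S mul inv z) x : mul (mul x (inv x)) x = x.
Proof. apply (a_inv A). Qed.
Lemma inv_r {S mul inv z} (A : @alg S mul inv z) x : mul (mul (inv x) x) (inv x) = inv x.
Proof. apply (a_inv A). Qed.

Lemma inv_inv {S mul inv z} (A : @alg S mul inv z) x : inv (inv x) = x.
Proof. symmetry; apply (a_uniq A); [apply (inv_r A) | apply (inv_l A)]. Qed.

Lemma idem_inv {S mul inv z} (A : @alg S mul inv z) e : mul e e = e -> inv e = e.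
Proof. intro H. symmetry; apply (a_uniq A); rewrite !H; auto. Qed.

Lemma idem_prod {S mul inv z} (A : @alg S mul inv z) e f :
  mul e e = e -> mul f f = f -> mul (mul e f) (mul e f) = mul e f.
Proof.
  intros He Hf.
  set (a := inv (mul e f)).
  assert (L : mul (mul (mul (mul e f) a) e) f = mul e f).
  { pose proof (inv_l A (mul e f)) as L. fold a in L. nrm A. nrmi A in L. exact L. }
  assert (R : mul (mul (mul a e) f) a = a).
  { pose proof (inv_r A (mul e f)) as L0. fold a in L0. nrmi A in L0. exact L0. }
  assert (Ha : mul (mul f a) e = a).
  { apply (a_uniq A (mul e f)); nrm A.
    - srw A Hf. srw A He. exact L.
    - srw A He. srw A Hf. srw A R. reflexivity. }
  assert (Haa : mul a a = a).
  { rewrite <- Ha at 1. nrm A. rewrite <- Ha at 2. nrm A. srw A R. exact Ha. }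
  assert (E : mul e f = a).
  { rewrite <- (inv_inv A (mul e f)). fold a. apply (idem_inv A); exact Haa. }
  rewrite E. exact Haa.
Qed.

Lemma idem_comm {S mul inv z} (A : @alg S mul inv z) e f :
  mul e e = e -> mul f f = f -> mul e f = mul f e.
Proof.
  intros He Hf.
  pose proof (idem_prod A e f He Hf) as P1.
  pose proof (idem_prod A f e Hf He) as P2.
  rewrite <- (idem_inv A (mul e f) P1).
  symmetry. apply (a_uniq A); nrm A.
  - srw A Hf. srw A He. nrmi A in P1. exact P1.
  - srw A He. srw A Hf. nrmi A in P2. exact P2.
Qed.

Lemma idem_xx {S mul inv z} (A : @alg S mul inv z) x :
  mul (mul x (inv x)) (mul x (inv x)) = mul x (inv x).
Proof. rewrite (a_assoc A). rewrite (inv_l A). reflexivity. Qed.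
Lemma idem_ixx {S mul inv z} (A : @alg S mul inv z) x :
  mul (mul (inv x) x) (mul (inv x) x) = mul (inv x) x.
Proof. rewrite (a_assoc A). rewrite (inv_r A). reflexivity. Qed.

Lemma inv_mul {S mul inv z} (A : @alg S mul inv z) x y :
  inv (mul x y) = mul (inv y) (inv x).
Proof.
  symmetry. apply (a_uniq A).
  - pose proof (idem_comm A _ _ (idem_xx A y) (idem_ixx A x)) as C.
    transitivity (mul (mul x (mul (mul y (inv y)) (mul (inv x) x))) y).
    { nrm A. reflexivity. }
    rewrite C. nrm A. srw A (inv_l A x). srw A (inv_l A y). reflexivity.
  - pose proof (idem_comm A _ _ (idem_xx A y) (idem_ixx A x)) as C.
    transitivity (mul (mul (inv y) (mul (mul (inv x) x) (mul y (inv y)))) (inv x)).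
    { nrm A. reflexivity. }
    rewrite <- C. nrm A. srw A (inv_r A y). srw A (inv_r A x). reflexivity.
Qed.

Lemma inv_z {S mul inv z} (A : @alg S mul inv z) : inv z = z.
Proof. apply (idem_inv A). apply (a_zl A). Qed.

Lemma key_l {S mul inv z} (A : @alg S mul inv z) e x :
  mul e e = e -> mul e x <> z -> mul x (inv x) = e.
Proof.
  intros He Hx. set (p := mul x (inv x)).
  assert (Hp : mul p p = p) by apply (idem_xx A).
  assert (C := idem_comm A e p He Hp).
  set (g := mul e p).
  assert (Hg : mul g g = g).
  { unfold g. transitivity (mul e (mul (mul p e) p)). { nrm A. reflexivity. }
    rewrite <- C. nrm A. rewrite He. rewrite <- (a_assoc A), Hp. reflexivity. }
  assert (Egx : mul g x = mul e x).
  { unfold g, p. rewrite <- !(a_assoc A). rewrite (a_assoc A x), (inv_l A). reflexivity. }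
  assert (gz : g <> z). { intro E. apply Hx. rewrite <- Egx, E. apply (a_zl A). }
  assert (ez : e <> z). { intro E. apply Hx. rewrite E. apply (a_zl A). }
  assert (pz : p <> z). { intro E. apply Hx. rewrite <- Egx. unfold g. rewrite E. rewrite (a_zr A), (a_zl A). reflexivity. }
  assert (G1 : g = e).
  { apply (a_prim A); auto. split; unfold g.
    - rewrite (a_assoc A), He. reflexivity.
    - rewrite C. rewrite <- (a_assoc A), He. reflexivity. }
  assert (G2 : g = p).
  { apply (a_prim A); auto. split; unfold g.
    - rewrite (a_assoc A), <- C, <- (a_assoc A), Hp. reflexivity.
    - rewrite <- (a_assoc A), Hp. reflexivity. }
  congruence.
Qed.

Lemma key_r {S mul inv z} (A : @alg S mul inv z) e x :
  mul e e = e -> mul x e <> z -> mul (inv x) x = e.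
Proof.
  intros He Hx. set (p := mul (inv x) x).
  assert (Hp : mul p p = p) by apply (idem_ixx A).
  assert (C := idem_comm A p e Hp He).
  set (g := mul p e).
  assert (Hg : mul g g = g).
  { unfold g. transitivity (mul p (mul (mul e p) e)). { nrm A. reflexivity. }
    rewrite <- C. nrm A. rewrite Hp. rewrite <- (a_assoc A), He. reflexivity. }
  assert (Egx : mul x g = mul x e).
  { unfold g, p. nrm A. rewrite (inv_l A). reflexivity. }
  assert (gz : g <> z). { intro E. apply Hx. rewrite <- Egx, E. apply (a_zr A). }
  assert (ez : e <> z). { intro E. apply Hx. rewrite E. apply (a_zr A). }
  assert (pz : p <> z). { intro E. apply Hx. rewrite <- Egx. unfold g. rewrite E. rewrite (a_zl A), (a_zr A). reflexivity. }
  assert (G1 : g = e).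
  { apply (a_prim A); auto. split; unfold g.
    - rewrite (a_assoc A), <- C, <- (a_assoc A), He. reflexivity.
    - rewrite <- (a_assoc A), He. reflexivity. }
  assert (G2 : g = p).
  { apply (a_prim A); auto. split; unfold g.
    - rewrite (a_assoc A), Hp. reflexivity.
    - rewrite <- (a_assoc A), <- C, (a_assoc A), Hp. reflexivity. }
  congruence.
Qed.

Definition Hf {S} (mul : S -> S -> S) (inv : S -> S) (f : S) : S -> Prop :=
  fun g => mul g (inv g) = f /\ mul (inv g) g = f.

Lemma H_idl {S mul inv z} (A : @alg S mul inv z) f g : Hf mul inv f g -> mul f g = g.
Proof. intros [H1 H2]. rewrite <- H1. apply (inv_l A). Qed.
Lemma H_idr {S mul inv z} (A : @alg S mul inv z) f g : Hf mul inv f g -> mul g f = g.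
Proof. intros [H1 H2]. rewrite <- H2, (a_assoc A). apply (inv_l A). Qed.
Lemma H_inv {S mul inv z} (A : @alg S mul inv z) f g : Hf mul inv f g -> Hf mul inv f (inv g).
Proof. intros [H1 H2]. split; rewrite (inv_inv A); auto. Qed.
Lemma H_mul {S mul inv z} (A : @alg S mul inv z) f g h :
  Hf mul inv f g -> Hf mul inv f h -> Hf mul inv f (mul g h).
Proof.
  intros Hg Hh. pose proof (H_idr A _ _ Hg). pose proof (H_idl A _ _ Hh).
  destruct Hg as [g1 g2], Hh as [h1 h2]. unfold Hf. rewrite (inv_mul A). split.
  - rewrite <- (a_assoc A), (a_assoc A h), h1, (a_assoc A), H, g1. reflexivity.
  - rewrite <- (a_assoc A), (a_assoc A (inv g)), g2, H0, h2. reflexivity.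
Qed.
Lemma H_self {S mul inv z} (A : @alg S mul inv z) f : mul f f = f -> Hf mul inv f f.
Proof. intro E. unfold Hf. rewrite (idem_inv A f E), E. auto. Qed.

Lemma group_inv {S mul inv z} (A : @alg S mul inv z) (G : S -> Prop) e g y :
  is_subgroup mul G e -> G g -> G y -> mul g y = e -> mul y g = e -> y = inv g.
Proof.
  intros [_ [_ [Hid _]]] Gg Gy E1 E2. apply (a_uniq A).
  - rewrite E1. apply (Hid g Gg).
  - rewrite E2. apply (Hid y Gy).
Qed.

Lemma maxH {S mul inv z} (A : @alg S mul inv z) f :
  mul f f = f -> maximal_subgroup mul (Hf mul inv f) f.
Proof.
  intro Ef. split.
  - split; [apply (H_self A f Ef)|]. split; [intros; apply (H_mul A); auto|].
    split; [intros x Hx; split; [apply (H_idl A _ _ Hx) | apply (H_idr A _ _ Hx)]|].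
    intros x Hx. exists (inv x). split; [apply (H_inv A); auto|]. destruct Hx; auto.
  - intros G' e' HG' sub x Gx.
    assert (Gf : G' f) by (apply sub; apply (H_self A f Ef)).
    destruct HG' as [Ge [Gm [Gid Ginv]]].
    assert (fe : f = e').
    { destruct (Ginv f Gf) as [u [Gu [fu uf]]].
      destruct (Gid f Gf) as [ef fe].
      rewrite <- fu. rewrite <- Ef at 2. rewrite <- (a_assoc A), fu. auto. }
    subst e'.
    destruct (Ginv x Gx) as [y [Gy [xy yx]]].
    assert (Ey : y = inv x).
    { apply (group_inv A G' f x y); auto. split; auto. }
    subst y. split; auto.
Qed.

Lemma cell_H {S mul inv z} (A : @alg S mul inv z) e f a x :
  mul a (inv a) = e -> mul (inv a) a = f -> mul x (inv x) = e -> mul (inv x) x = f ->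
  Hf mul inv f (mul (inv a) x).
Proof.
  intros a1 a2 x1 x2. unfold Hf. rewrite (inv_mul A), (inv_inv A). split.
  - transitivity (mul (mul (inv a) (mul x (inv x))) a). { nrm A. reflexivity. }
    rewrite x1, <- a1. nrm A. rewrite (inv_r A). exact a2.
  - transitivity (mul (mul (inv x) (mul a (inv a))) x). { nrm A. reflexivity. }
    rewrite a1, <- x1. nrm A. rewrite (inv_r A). exact x2.
Qed.

Lemma open_ext {S} (T : topology S) (U V : S -> Prop) :
  is_open T U -> (forall x, U x <-> V x) -> is_open T V.
Proof.
  intros H E. replace V with U; auto.
  apply functional_extensionality; intro x. apply propositional_extensionality. apply E.
Qed.

Lemma open_local {S} (T : topology S) (A : S -> Prop) :
  (forall x, A x -> exists U, is_open T U /\ U x /\ forall y, U y -> A y) -> is_open T A.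
Proof.
  intro H.
  set (I := {U : S -> Prop | is_open T U /\ forall y, U y -> A y}).
  apply (open_ext T (fun x => exists i : I, proj1_sig i x)).
  - apply open_union. intro i. exact (proj1 (proj2_sig i)).
  - intro x. split.
    + intros [i Ux]. apply (proj2 (proj2_sig i)); exact Ux.
    + intro Ax. destruct (H x Ax) as [U [HU [Ux HA]]].
      exists (exist _ U (conj HU HA)). exact Ux.
Qed.

Record tsg {S} (T : topology S) (mul : S -> S -> S) : Prop := {
  t_haus : hausdorff T;
  t_cont : continuous_wrt (prod_open (is_open T) (is_open T)) (is_open T)
    (fun p => mul (fst p) (snd p)) }.
Arguments t_haus {S T mul} _.
Arguments t_cont {S T mul} _.

Lemma cont_pt {S} {T : topology S} {mul} (TS : tsg T mul) (W : S -> Prop) a b :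
  is_open T W -> W (mul a b) ->
  exists U V, is_open T U /\ is_open T V /\ U a /\ V b /\ forall u v, U u -> V v -> W (mul u v).
Proof.
  intros HW Wab. destruct (t_cont TS W HW (a, b) Wab) as [U [V [HU [HV [Ua [Vb HUV]]]]]].
  exists U, V. repeat split; auto.
Qed.

Lemma open_lmul {S} {T : topology S} {mul} (TS : tsg T mul) (W : S -> Prop) a :
  is_open T W -> is_open T (fun x => W (mul a x)).
Proof.
  intro HW. apply open_local. intros x Wx.
  destruct (cont_pt TS W a x HW Wx) as [U [V [HU [HV [Ua [Vx H]]]]]].
  exists V. repeat split; auto.
Qed.

Lemma open_rmul {S} {T : topology S} {mul} (TS : tsg T mul) (W : S -> Prop) a :
  is_open T W -> is_open T (fun x => W (mul x a)).
Proof.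
  intro HW. apply open_local. intros x Wx.
  destruct (cont_pt TS W x a HW Wx) as [U [V [HU [HV [Ux [Va H]]]]]].
  exists U. repeat split; auto.
Qed.

Lemma open_neq {S} {T : topology S} {mul} (TS : tsg T mul) c :
  is_open T (fun x => x <> c).
Proof.
  apply open_local. intros x Hx.
  destruct (t_haus TS x c Hx) as [U [V [HU [HV [Ux [Vc D]]]]]].
  exists U. repeat split; auto. intros y Uy E. subst y. exact (D c Uy Vc).
Qed.

Lemma open_list_inter {S X} (T : topology S) (F : X -> S -> Prop) (l : list X) :
  (forall a, In a l -> is_open T (F a)) -> is_open T (fun x => forall a, In a l -> F a x).
Proof.
  induction l as [|b l IH]; intro H.
  - apply (open_ext T (fun _ => True)). apply open_full. intro x; split; auto.
    intros _ a [].
  - apply (open_ext T (fun x => F b x /\ (forall a, In a l -> F a x))).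
    + apply open_inter. apply H; left; auto. apply IH. intros; apply H; right; auto.
    + intro x. split.
      * intros [Hb Hl] a [E|Ha]. subst; auto. auto.
      * intro Hx. split. apply Hx; left; auto. intros; apply Hx; right; auto.
Qed.

Lemma greedy {X} (P : list X -> X -> Prop) :
  (forall l, exists x, P l x) ->
  exists s : nat -> X, forall n, exists l, P l (s n) /\ forall k, k < n -> In (s k) l.
Proof.
  intro H.
  set (next := fun l => proj1_sig (constructive_indefinite_description _ (H l))).
  assert (Hn : forall l, P l (next l)).
  { intro l. unfold next. destruct (constructive_indefinite_description _ (H l)); auto. }
  set (hist := fix hist (n : nat) : list X :=
         match n with 0 => nil | S m => next (hist m) :: hist m end).
  exists (fun n => next (hist n)). intro n. exists (hist n). split; auto.
  induction n as [|n IH]; intros k Hk.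
  - lia.
  - simpl. destruct (Nat.eq_dec k n) as [E|E].
    + subst; left; auto.
    + right. apply IH. lia.
Qed.

Lemma cluster {Y} (T : topology Y) (D : Y -> Prop) (c : nat -> Y) :
  countably_compact T -> is_open T (fun x => ~ D x) -> (forall n, D (c n)) ->
  exists p, D p /\ forall Q, is_open T Q -> Q p -> forall N, exists n, N <= n /\ Q (c n).
Proof.
  intros CC HD Dc. apply NNPP. intro Hno.
  assert (Hall : forall p, D p -> exists Q N, is_open T Q /\ Q p /\ forall n, N <= n -> ~ Q (c n)).
  { intros p Dp. apply NNPP. intro H1. apply Hno. exists p. split; auto.
    intros Q HQ Qp N. apply NNPP. intro H2. apply H1. exists Q, N. repeat split; auto.
    intros n Hn Qn. apply H2. exists n; auto. }
  set (U := fun n x => match n with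
                       | 0 => ~ D x
                       | S k => exists Q, is_open T Q /\ Q x /\ forall n, k <= n -> ~ Q (c n)
                       end).
  destruct (CC U) as [N HN].
  - intros [|k]; simpl. exact HD.
    apply open_local. intros x [Q [HQ [Qx HQc]]]. exists Q. repeat split; auto.
    intros y Qy. exists Q. repeat split; auto.
  - intro x. destruct (classic (D x)) as [Dx|Dx].
    + destruct (Hall x Dx) as [Q [N [HQ [Qx HQc]]]]. exists (S N). simpl. exists Q; auto.
    + exists 0. simpl. exact Dx.
  - destruct (HN (c N)) as [[|k] [Hk Uk]]; simpl in Uk.
    + apply Uk, Dc.
    + destruct Uk as [Q [_ [Qc HQc]]]. apply (HQc N). lia. exact Qc.
Qed.

Lemma fin_idem {Y} (T : topology Y) (W : Y -> Prop) (phi : Y -> Y) (P : Y -> Y -> Prop) :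
  countably_compact T -> is_open T W ->
  (forall e, is_open T (P e)) -> (forall x, ~ W x -> P (phi x) x) ->
  (forall e u, ~ W u -> P e u -> phi u = e) ->
  exists l, forall y, ~ W y -> exists u, In u l /\ phi u = phi y.
Proof.
  intros CC HW HP H1 H2. apply NNPP. intro Hno.
  assert (Hg : forall l, exists y, (~ W y /\ forall u, In u l -> phi u <> phi y)).
  { intro l. apply NNPP. intro H. apply Hno. exists l. intros y Wy.
    apply NNPP. intro H3. apply H. exists y. split; auto. intros u Hu E. apply H3. exists u; auto. }
  destruct (greedy _ Hg) as [s Hs].
  set (O := fun x => exists Q, is_open T Q /\ Q x /\ forall n, ~ Q (s n)).
  set (U := fun n x => match n with
                       | 0 => W x
                       | 1 => O x
                       | Datatypes.S (Datatypes.S k) => P (phi (s k)) x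
                       end).
  destruct (CC U) as [N HN].
  - intros [|[|k]]; unfold U; simpl; auto.
    apply open_local. intros x [Q [HQ [Qx HQs]]]. exists Q. repeat split; auto.
    intros y Qy. exists Q. repeat split; auto.
  - intro x. unfold U. destruct (classic (W x)) as [Wx|Wx]. exists 0; auto.
    destruct (classic (O x)) as [Ox|Ox]. exists 1; auto.
    assert (exists n, P (phi x) (s n)).
    { apply NNPP. intro H. apply Ox. exists (P (phi x)). repeat split; auto.
      intros n Pn. apply H. exists n; auto. }
    destruct H as [n Pn].
    destruct (Hs n) as [l [[Wn _] _]].
    pose proof (H2 _ _ Wn Pn) as E.
    exists (Datatypes.S (Datatypes.S n)). simpl. rewrite E. apply H1; auto.
  - destruct (HN (s N)) as [[|[|k]] [Hk Uk]]; unfold U in Uk; simpl in Uk.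
    + destruct (Hs N) as [l [[Wn _] _]]. auto.
    + destruct Uk as [Q [_ [Qs HQ]]]. exact (HQ N Qs).
    + destruct (Hs N) as [l [[Wn Hl] Hin]].
      apply (Hl (s k)). apply Hin. lia. symmetry. apply H2; auto.
Qed.

Lemma list_filter_ex {X} (D : X -> Prop) (l : list X) :
  exists l', (forall d, In d l' -> D d) /\ forall d, In d l -> D d -> In d l'.
Proof.
  induction l as [|a l [l' [H1 H2]]].
  - exists nil. split; intros d []; auto.
  - destruct (classic (D a)) as [Da|Da].
    + exists (a :: l'). split.
      * intros d [E|Hd]; [subst; auto | auto].
      * intros d [E|Hd] Dd; [left; auto | right; auto].
    + exists l'. split; auto. intros d [E|Hd] Dd; [subst; contradiction | auto].
Qed.

Lemma group_cover {S mul inv z} (A : @alg S mul inv z) {T : topology S} (TS : tsg T mul)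
  (CC : countably_compact T) f
  (Hinv : forall W, is_open T W -> exists U0, is_open T U0 /\
            forall g, Hf mul inv f g -> (U0 g <-> W (inv g)))
  (D : S -> Prop) (Q0 : S -> Prop) :
  is_open T (fun x => ~ D x) -> (forall x, D x -> Hf mul inv f x) ->
  is_open T Q0 -> Q0 f ->
  exists l, (forall d, In d l -> D d) /\
     forall c, D c -> exists d, In d l /\ Q0 (mul (inv d) c).
Proof.
  intros HD DH HQ0 Q0f. apply NNPP. intro Hno.
  assert (Hg : forall l, exists c, D c /\ forall d, In d l -> D d -> ~ Q0 (mul (inv d) c)).
  { intro l. destruct (list_filter_ex D l) as [l' [L1 L2]].
    apply NNPP. intro H. apply Hno. exists l'. split; auto. intros c Dc.
    apply NNPP. intro H3. apply H. exists c. split; auto. intros d Hd Dd Q.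
    apply H3. exists d. split; auto. }
  destruct (greedy _ Hg) as [s Hs].
  assert (Ds : forall n, D (s n)). { intro n. destruct (Hs n) as [l [[Dn _] _]]. auto. }
  destruct (cluster T D s CC HD Ds) as [p [Dp Hp]].
  assert (Hpf := DH p Dp).
  assert (Wf : Q0 (mul (inv p) p)). { destruct Hpf as [_ E]. rewrite E. auto. }
  destruct (cont_pt TS Q0 (inv p) p HQ0 Wf) as [P1 [P2 [HP1 [HP2 [P1p [P2p HPP]]]]]].
  destruct (Hinv P1 HP1) as [U0 [HU0 EU0]].
  assert (HQ : is_open T (fun x => U0 x /\ P2 x)) by (apply open_inter; auto).
  assert (Qp : U0 p /\ P2 p). { split; auto. apply EU0; auto. }
  destruct (Hp _ HQ Qp 0) as [n [_ [U0n P2n]]].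
  destruct (Hp _ HQ Qp (Datatypes.S n)) as [m [Hm [U0m P2m]]].
  destruct (Hs m) as [l [[Dm Hl] Hin]].
  apply (Hl (s n)).
  - apply Hin. lia.
  - apply Ds.
  - apply HPP; auto. apply EU0; auto.
Qed.

Lemma H_isolated {S mul inv z} (A : @alg S mul inv z) {T : topology S} (TS : tsg T mul)
  (CC : countably_compact T) f (Ef : mul f f = f) (fz : f <> z)
  (Hinv : forall W, is_open T W -> exists U0, is_open T U0 /\
            forall g, Hf mul inv f g -> (U0 g <-> W (inv g))) :
  exists U0, is_open T U0 /\ U0 z /\ forall g, U0 g -> ~ Hf mul inv f g.
Proof.
  apply NNPP. intro Hno.
  assert (Hno' : forall U0, is_open T U0 -> U0 z -> exists g, U0 g /\ Hf mul inv f g).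
  { intros U0 HU Uz. apply NNPP. intro H. apply Hno. exists U0. repeat split; auto.
    intros g Ug Hg. apply H. exists g; auto. }
  destruct (t_haus TS z f (fun E => fz (eq_sym E))) as [V [O [HV [HO [Vz [Of DVO]]]]]].
  assert (nVf : ~ V f) by (intro; apply (DVO f); auto).
  assert (Vzz : V (mul z z)) by (rewrite (a_zl A); auto).
  destruct (cont_pt TS V z z HV Vzz) as [U1 [U2 [HU1 [HU2 [U1z [U2z HU12]]]]]].
  set (V1 := fun x => U1 x /\ U2 x).
  assert (HV1 : is_open T V1) by (apply open_inter; auto).
  assert (V1z : V1 z) by (split; auto).
  assert (V1V : forall a b, V1 a -> V1 b -> V (mul a b)).
  { intros a b [] []. apply HU12; auto. }
  set (D := fun x => Hf mul inv f x /\ ~ V1 x).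
  assert (HD : is_open T (fun x => ~ D x)).
  { apply open_local. intros x nDx.
    destruct (classic (V1 x)) as [V1x|nV1x].
    - exists V1. split; [auto|split; [auto|]]. intros y Vy [_ nV]. auto.
    - assert (nH : ~ Hf mul inv f x). { intro H. apply nDx. split; auto. }
      destruct (classic (mul f x = z)) as [fx|fx].
      + exists (fun u => V1 (mul f u)). split; [|split].
        * apply (open_lmul TS); auto.
        * rewrite fx. auto.
        * intros y Vy [Hy nVy]. apply nVy. rewrite <- (H_idl A f y Hy). auto.
      + destruct (classic (mul x f = z)) as [xf|xf].
        * exists (fun u => V1 (mul u f)). split; [|split].
          -- apply (open_rmul TS); auto.
          -- rewrite xf. auto.
          -- intros y Vy [Hy nVy]. apply nVy. rewrite <- (H_idr A f y Hy). auto.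
        * exfalso. apply nH. split; [apply (key_l A) | apply (key_r A)]; auto. }
  assert (Vzf : V (mul z f)) by (rewrite (a_zl A); auto).
  destruct (cont_pt TS V z f HV Vzf) as [P0 [Q0 [HP0 [HQ0 [P0z [Q0f HPQ]]]]]].
  destruct (group_cover A TS CC f Hinv D Q0 HD (fun x Dx => proj1 Dx) HQ0 Q0f)
    as [l [Dl Hl]].
  set (P' := fun x => V1 x /\ forall d, In d l -> P0 (mul x d)).
  assert (HP' : is_open T P').
  { apply open_inter; auto. apply (open_list_inter T (fun d x => P0 (mul x d))).
    intros d _. apply (open_rmul TS); auto. }
  assert (P'z : P' z). { split; auto. intros d _. rewrite (a_zl A). auto. }
  destruct (Hno' P' HP' P'z) as [g [[V1g Pg] Hg]].
  assert (Hg' := H_inv A f g Hg).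
  assert (nV1g' : ~ V1 (inv g)).
  { intro H. apply nVf. destruct Hg as [E _]. rewrite <- E. apply V1V; auto. }
  destruct (Hl (inv g) (conj Hg' nV1g')) as [d [Hd Qd]].
  assert (Hdd : Hf mul inv f d) by (apply (Dl d Hd)).
  apply nVf.
  replace f with (mul (mul g d) (mul (inv d) (inv g))).
  - apply HPQ; auto.
  - transitivity (mul (mul g (mul d (inv d))) (inv g)). { nrm A. reflexivity. }
    destruct Hdd as [E1 _]. rewrite E1. rewrite (H_idr A f g Hg). destruct Hg; auto.
Qed.

Lemma Hinv_cont {S mul inv z} (A : @alg S mul inv z) (T : topology S)
  (hG : forall (G : S -> Prop) (e : S), maximal_subgroup mul G e -> topological_subgroup mul T G e)
  f (Ef : mul f f = f) :
  forall W, is_open T W -> exists U0, is_open T U0 /\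
            forall g, Hf mul inv f g -> (U0 g <-> W (inv g)).
Proof.
  intros W HW.
  pose proof (maxH A f Ef) as MH.
  destruct (hG _ _ MH) as [m [i [Hm [Hi [Cm Ci]]]]].
  assert (Ei : forall g, proj1_sig (i g) = inv (proj1_sig g)).
  { intro g. destruct (Hi g) as [E1 E2].
    apply (group_inv A (Hf mul inv f) f); auto.
    - exact (proj1 MH).
    - exact (proj2_sig g).
    - exact (proj2_sig (i g)). }
  destruct (Ci (fun g => W (proj1_sig g))) as [U0 [HU0 EU0]].
  { exists W. split; auto. intro; tauto. }
  exists U0. split; auto. intros g Hg.
  specialize (EU0 (exist _ g Hg)). simpl in EU0. rewrite Ei in EU0. simpl in EU0. tauto.
Qed.

Lemma cell_iso {S mul inv z} (A : @alg S mul inv z) {T : topology S} (TS : tsg T mul)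
  (CC : countably_compact T)
  (hG : forall (G : S -> Prop) (e : S), maximal_subgroup mul G e -> topological_subgroup mul T G e)
  e f : exists U, is_open T U /\ U z /\
     forall x, U x -> x <> z -> ~ (mul x (inv x) = e /\ mul (inv x) x = f).
Proof.
  destruct (classic (exists a, a <> z /\ mul a (inv a) = e /\ mul (inv a) a = f))
    as [[a [az [ae af]]]|Hn].
  - assert (Ef : mul f f = f) by (rewrite <- af; apply (idem_ixx A)).
    assert (fz : f <> z).
    { intro E. apply az. assert (Ea : mul a f = a) by (rewrite <- af, (a_assoc A), (inv_l A); auto).
      rewrite <- Ea, E. apply (a_zr A). }
    destruct (H_isolated A TS CC f Ef fz (Hinv_cont A T hG f Ef)) as [U0 [HU0 [U0z HU]]].
    exists (fun x => U0 (mul (inv a) x)). split; [apply (open_lmul TS U0); auto|split].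
    + rewrite (a_zr A). auto.
    + intros x Ux xz [xe xf]. apply (HU _ Ux). apply (cell_H A e f a x); auto.
  - exists (fun _ => True). split; [apply open_full|split; auto].
    intros x _ xz [xe xf]. apply Hn. exists x. auto.
Qed.

Lemma inv_cont_back {S mul inv z} (A : @alg S mul inv z) {T : topology S} (TS : tsg T mul)
  (CC : countably_compact T)
  (hG : forall (G : S -> Prop) (e : S), maximal_subgroup mul G e -> topological_subgroup mul T G e) :
  continuous T T inv.
Proof.
  intros W HW. apply open_local. intros a Wa.
  destruct (classic (a = z)) as [az|az].
  - subst a. rewrite (inv_z A) in Wa.
    assert (Wz : forall x, ~ W x -> x <> z). { intros x Wx E. subst; auto. }
    destruct (fin_idem T W (fun y => mul y (inv y)) (fun e u => mul e e = e /\ mul e u <> z)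
                CC HW) as [l1 Hl1].
    { intro e. destruct (classic (mul e e = e)) as [Ee|Ee].
      - apply (open_ext T (fun u => mul e u <> z)). apply (open_lmul TS (fun y => y <> z) e (open_neq TS z)).
        intro; tauto.
      - apply (open_ext T (fun _ => False)). apply open_empty. intro; tauto. }
    { intros x Wx. split. apply (idem_xx A). rewrite (inv_l A). auto. }
    { intros e u Wu [Ee Eu]. apply (key_l A); auto. }
    destruct (fin_idem T W (fun y => mul (inv y) y) (fun e u => mul e e = e /\ mul u e <> z)
                CC HW) as [l2 Hl2].
    { intro e. destruct (classic (mul e e = e)) as [Ee|Ee].
      - apply (open_ext T (fun u => mul u e <> z)). apply (open_rmul TS (fun y => y <> z) e (open_neq TS z)).
        intro; tauto.
      - apply (open_ext T (fun _ => False)). apply open_empty. intro; tauto. }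
    { intros x Wx. split. apply (idem_ixx A). rewrite (a_assoc A), (inv_l A). auto. }
    { intros e u Wu [Ee Eu]. apply (key_r A); auto. }
    set (cU := fun e f => proj1_sig (constructive_indefinite_description _
                 (cell_iso A TS CC hG e f))).
    assert (HcU : forall e f, is_open T (cU e f) /\ cU e f z /\
        forall x, cU e f x -> x <> z -> ~ (mul x (inv x) = e /\ mul (inv x) x = f)).
    { intros e f. unfold cU. destruct (constructive_indefinite_description _ _). auto. }
    exists (fun x => forall u1, In u1 l1 -> forall u2, In u2 l2 ->
                cU (mul (inv u2) u2) (mul u1 (inv u1)) x).
    split; [|split].
    + apply (open_list_inter T (fun u1 x => forall u2, In u2 l2 ->
                cU (mul (inv u2) u2) (mul u1 (inv u1)) x)).
      intros u1 _. apply (open_list_inter T (fun u2 x => cU (mul (inv u2) u2) (mul u1 (inv u1)) x)).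
      intros u2 _. apply HcU.
    + intros. apply HcU.
    + intros x Ux. apply NNPP. intro Wx.
      destruct (Hl1 (inv x) Wx) as [u1 [I1 E1]].
      destruct (Hl2 (inv x) Wx) as [u2 [I2 E2]].
      rewrite (inv_inv A) in E1, E2.
      apply (proj2 (proj2 (HcU _ _)) x (Ux u1 I1 u2 I2)).
      * intro E. subst x. apply Wx. rewrite (inv_z A). auto.
      * rewrite E1, E2. auto.
  - set (e := mul a (inv a)). set (f := mul (inv a) a).
    assert (Ef : mul f f = f) by apply (idem_ixx A).
    assert (Ee : mul e e = e) by apply (idem_xx A).
    destruct (Hinv_cont A T hG f Ef (fun y => W (mul y (inv a)))) as [U0 [HU0 EU0]].
    { apply (open_rmul TS W); auto. }
    exists (fun x => (mul e x <> z /\ mul x f <> z) /\ U0 (mul (inv a) x)).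
    split; [|split].
    + apply open_inter. apply open_inter.
      apply (open_lmul TS (fun y => y <> z) e (open_neq TS z)).
      apply (open_rmul TS (fun y => y <> z) f (open_neq TS z)).
      apply (open_lmul TS U0); auto.
    + split; [split|].
      * unfold e. rewrite (inv_l A). auto.
      * unfold f. rewrite (a_assoc A), (inv_l A). auto.
      * apply EU0. apply (H_self A f Ef). change (W (mul (inv f) (inv a))). rewrite (idem_inv A f Ef). unfold f.
        rewrite (inv_r A). auto.
    + intros x [[ex xf] Ux].
      assert (xe : mul x (inv x) = e) by (apply (key_l A); auto).
      assert (xf' : mul (inv x) x = f) by (apply (key_r A); auto).
      assert (Hg := cell_H A e f a x eq_refl eq_refl xe xf').
      apply EU0 in Ux; auto.
      rewrite (inv_mul A), (inv_inv A) in Ux.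
      rewrite <- (a_assoc A) in Ux. fold e in Ux. rewrite <- xe, (a_assoc A), (inv_r A) in Ux.
      exact Ux.
Qed.

Lemma forward {S mul inv z} (A : @alg S mul inv z) {T : topology S} (TS : tsg T mul)
  (Ci : continuous T T inv) (G : S -> Prop) (e : S) :
  maximal_subgroup mul G e -> topological_subgroup mul T G e.
Proof.
  intros [SG _].
  pose proof SG as [Ge [Gm [Gid Ginv]]].
  assert (Gi : forall g, G g -> G (inv g) /\ mul g (inv g) = e /\ mul (inv g) g = e).
  { intros g Gg. destruct (Ginv g Gg) as [y [Gy [E1 E2]]].
    assert (y = inv g) by (apply (group_inv A G e); auto). subst y. auto. }
  exists (fun a b => exist _ (mul (proj1_sig a) (proj1_sig b))
                       (Gm _ _ (proj2_sig a) (proj2_sig b))).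
  exists (fun a => exist _ (inv (proj1_sig a)) (proj1 (Gi _ (proj2_sig a)))).
  split; [reflexivity|split; [|split]].
  - intro a. simpl. apply (Gi _ (proj2_sig a)).
  - intros V [U [HU EU]] [a b] Vab. simpl in Vab. apply EU in Vab. simpl in Vab.
    destruct (cont_pt TS U _ _ HU Vab) as [U1 [U2 [HU1 [HU2 [U1a [U2b H]]]]]].
    exists (fun g => U1 (proj1_sig g)), (fun g => U2 (proj1_sig g)).
    split; [exists U1; split; auto; intro; tauto|].
    split; [exists U2; split; auto; intro; tauto|].
    split; [auto|split; [auto|]].
    intros c d Uc Ud. apply EU. simpl. apply H; auto.
  - intros V [U [HU EU]]. exists (fun x => U (inv x)). split.
    + apply Ci; auto.
    + intro g. rewrite EU. simpl. tauto.
Qed.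

Theorem corollary3p11 (S : Type) (T : topology S) (mul : S -> S -> S) (inv : S -> S) :
  topological_semigroup mul T ->
  countably_compact T ->
  primitive_inverse_semigroup mul ->
  (* inv is the inversion x |-> x^{-1} of the inverse semigroup *)
  (forall x, mul (mul x (inv x)) x = x /\ mul (mul (inv x) x) (inv x) = inv x) ->
  (continuous T T inv <->
   forall (G : S -> Prop) (e : S), maximal_subgroup mul G e -> topological_subgroup mul T G e).
Proof.
  intros [Hh [_ Hc]] CC [[Has Huniq] [z [Hz [_ Hprim]]]] Hinv.
  assert (A : alg mul inv z).
  { split; auto.
    - intros x y E1 E2. destruct (Huniq x) as [y0 [_ U]].
      transitivity y0; [symmetry; apply U; auto | apply U; auto].
    - intro x. apply (Hz x).
    - intro x. apply (Hz x). }
  assert (TS : tsg T mul) by (split; auto).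
  split.
  - intros Ci G e. apply (forward A TS Ci).
  - intro hG. apply (inv_cont_back A TS CC hG).
Qed.
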